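(* Let $E$ be an equation in the unknowns $x_1,\dots,x_n$ and let $h$ be an erasing solution of $E$ of rank $n-1$. Then $h(x_k)$ is the empty word for exactly one index $k$, the equation $\delta_k(E)$ is trivial, and $\Gamma_h=\{\mathbf u\in\mathbb Q^n:(\mathbf u)_k=0\}$.
   Context: An equation is a pair $(u,v)$ of words over $\{x_1,\dots,x_n\}$, trivial if $u=v$; a solution is a morphism $h$ into a free monoid $\{a_1,\dots,a_r\}^*$ with $h(u)=h(v)$; $h$ is erasing if some $h(x_i)$ is empty. $\gamma(h)_i=(|h(x_1)|_{a_i},\dots,|h(x_n)|_{a_i})$, $\Gamma_h$ is the $\mathbb Q$-span of the $\gamma(h)_i$ and the rank of $h$ is $\dim\Gamma_h$. $\delta_k(E)$ denotes the equation in $n-1$ unknowns obtained from $E$ by deleting all occurrences of $x_k$ on both sides. *)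

(* Defs.v *)
From HB Require Import structures.
From mathcomp Require Import all_boot all_order all_algebra.
Set Implicit Arguments. Unset Strict Implicit. Unset Printing Implicit Defensive.
Import Order.TTheory GRing.Theory Num.Theory.

(* Unknowns x_1..x_n are 'I_n ; letters a_1..a_r are 'I_r. *)
Definition word (n : nat) := seq 'I_n.

Definition equation (n : nat) := (word n * word n)%type.

Definition trivial_eq n (E : equation n) : Prop := E.1 = E.2.

Definition hmorph n r (h : 'I_n -> seq 'I_r) (w : word n) : seq 'I_r :=
  flatten (map h w).

Definition is_solution n r (h : 'I_n -> seq 'I_r) (E : equation n) : Prop :=
  hmorph h E.1 = hmorph h E.2.

Definition erasing n r (h : 'I_n -> seq 'I_r) : Prop := exists i, h i = [::].

(* gamma(h)_i = (|h(x_1)|_{a_i}, ..., |h(x_n)|_{a_i}) : the i-th row. *)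
Definition gamma_mx n r (h : 'I_n -> seq 'I_r) : 'M[rat]_(r, n) :=
  \matrix_(i < r, j < n) ((count_mem i (h j))%:R : rat).

(* Gamma_h = Q-span of the gamma(h)_i = row space of gamma_mx h;
   rank of h = dim Gamma_h. *)
Definition rank_h n r (h : 'I_n -> seq 'I_r) : nat := \rank (gamma_mx h).

(* delta_k(E): delete all occurrences of x_k, the remaining unknowns being
   renamed x_1..x_{n-1} (order preserving) via unlift k. *)
Definition delta n (k : 'I_n) (E : equation n) : equation n.-1 :=
  (pmap (unlift k) E.1, pmap (unlift k) E.2).

(* Main.v *)
Require Import Defs.
From HB Require Import structures.
From mathcomp Require Import all_boot all_order all_algebra.
Import Order.TTheory GRing.Theory Num.Theory.
Set Implicit Arguments. Unset Strict Implicit.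
From mathcomp Require Import ring zify.
Local Open Scope ring_scope.

Section Sig.
Variables (T : eqType) (x y : T).
Definition sig (w : seq T) : seq T :=
  flatten (map (fun z => if z == y then [:: x; y] else [:: z]) w).
Fixpoint tau (w : seq T) : seq T :=
  match w with
  | [::] => [::]
  | z :: s => match s with
     | z2 :: s2 => if (z == x) && (z2 == y) then y :: tau s2 else z :: tau s
     | [::] => [:: z]
     end
  end.
Lemma sig_cons z s : sig (z :: s) = (if z == y then [:: x; y] else [:: z]) ++ sig s.
Proof. by []. Qed.
Lemma sig_head (hxy : x != y) s z2 s2 : sig s = z2 :: s2 -> z2 != y.
Proof.
case: s => [|a s] //=; rewrite sig_cons; case: eqP => [_|/eqP ha] /= [<- _] //.
Qed.
Lemma tauK (hxy : x != y) w : tau (sig w) = w.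
Proof.
elim: w => [|z s IH] //; rewrite sig_cons; case: (eqVneq z y) => [->|hz] /=.
  by rewrite !eqxx /= IH.
case E: (sig s) => [|z2 s2].
  by case: s E IH => [|a s] //; rewrite sig_cons; case: (a == y).
by rewrite (negbTE (sig_head hxy E)) andbF -E IH.
Qed.
End Sig.

Section Main.
Variables m r : nat.
Implicit Types h g : 'I_m -> seq 'I_r.

Definition indep h := forall c : 'I_m -> rat,
  (forall i : 'I_r, \sum_j c j * (count_mem i (h j))%:R = 0)%R -> forall j, c j = 0%R.

Lemma sum_delta (a : 'I_m) (f : 'I_m -> rat) :
  (\sum_j (j == a)%:R * f j = f a)%R.
Proof.
rewrite (bigD1 a) //= eqxx mul1r big1 ?addr0 // => j /negbTE ->; by rewrite mul0r.
Qed.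

Lemma indep_nonempty h j : indep h -> h j != [::].
Proof.
move=> hi; apply/eqP => hj.
suff : ((fun j' => (j' == j)%:R) j = 0 :> rat) by move=> /eqP; rewrite /= eqxx oner_eq0.
apply: (hi (fun j' => (j' == j)%:R)) => i; by rewrite sum_delta hj.
Qed.

Lemma indep_neq h a b : a != b -> h a = h b -> ~ indep h.
Proof.
move=> hab he hi.
suff : ((fun j => (j == a)%:R - (j == b)%:R) a = 0 :> rat).
  by move=> /eqP; rewrite /= eqxx (negbTE hab) subr0 oner_eq0.
apply: (hi (fun j => (j == a)%:R - (j == b)%:R)) => i.
under eq_bigr do rewrite mulrBl.
by rewrite sumrB !sum_delta he subrr.
Qed.

Lemma cat_prefix (s1 t1 s2 t2 : seq 'I_r) : s1 ++ t1 = s2 ++ t2 ->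
  (size s1 <= size s2)%N -> s2 = s1 ++ drop (size s1) s2.
Proof.
move=> e le; have : take (size s1) (s1 ++ t1) = take (size s1) (s2 ++ t2) by rewrite e.
rewrite take_size_cat // take_cat ltn_neqAle le andbT.
case: eqP => [eq|_] /= ->.
  by rewrite eq subnn take0 cats0 drop_size cats0.
by rewrite size_take_min (minn_idPl le) cat_take_drop.
Qed.

Lemma hm_cons h a w : hmorph h (a :: w) = h a ++ hmorph h w.
Proof. by []. Qed.

Lemma hm_sig h g (a b : 'I_m) : a != b -> h b = h a ++ g b ->
  (forall j, j != b -> g j = h j) -> forall w, hmorph g (sig a b w) = hmorph h w.
Proof.
move=> hab hb hg; elim => [|z s IH] //.
rewrite sig_cons /hmorph map_cat flatten_cat; rewrite /hmorph in IH; rewrite IH /=.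
case: (eqVneq z b) => [->|hz] /=; last by rewrite hg // cats0.
by rewrite cats0 hg // hb.
Qed.

Lemma main N : forall h, (\sum_j size (h j) < N)%N -> indep h ->
  forall u v, hmorph h u = hmorph h v -> u = v.
Proof.
elim: N => [//|N IHN] h hs hi.
have desc : forall a b u' v', a != b -> (size (h a) <= size (h b))%N ->
    h a ++ hmorph h u' = h b ++ hmorph h v' -> a :: u' = b :: v'.
  move=> a b u' v' hab le e.
  set t := drop (size (h a)) (h b).
  have hb : h b = h a ++ t := cat_prefix e le.
  have tne : t != [::].
    apply/eqP => t0; apply: (indep_neq hab) hi; by rewrite hb t0 cats0.
  pose g j := if j == b then t else h j.
  have hg : forall j, j != b -> g j = h j by move=> j /negbTE; rewrite /g => ->.
  have gb : g b = t by rewrite /g eqxx.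
  have hsig := hm_sig hab (etrans hb (congr1 _ (esym gb))) hg.
  apply: (can_inj (tauK hab)); apply: (IHN g).
  - have ES : (\sum_j size (h j) = \sum_j size (g j) + size (h a))%N.
      rewrite (bigD1 b) //= [in RHS](bigD1 b) //= gb hb size_cat.
      rewrite [in RHS](eq_bigr (fun j => size (h j))); last by move=> j /hg ->.
      lia.
    move: hs; rewrite ES.
    have : (0 < size (h a))%N by rewrite lt0n size_eq0 indep_nonempty.
    move: (\sum_(i | _) _)%N => S; lia.
  - move=> c hc.
    pose c' (j : 'I_m) := if j == a then (c a - c b)%R else c j.
    have hc' : forall i : 'I_r, (\sum_j c' j * (count_mem i (h j))%:R = 0)%R.
      move=> i; rewrite -[X in _ = X](hc i).
      rewrite (eq_bigr (fun j => c j * (count_mem i (g j))%:R + ((j == a)%:R * (- c b * (count_mem i (h a))%:R)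
                + (j == b)%:R * (c b * (count_mem i (h a))%:R))))%R.
        by rewrite big_split big_split /= !sum_delta mulNr addNr addr0.
      move=> j _; rewrite /c' /g.
      case: (eqVneq j a) => [->|ja].
        by rewrite (negbTE hab) /= mul1r mul0r addr0; ring.
      case: (eqVneq j b) => [->|jb]; last by rewrite /= !mul0r !addr0.
      by rewrite hb count_cat natrD mul1r mul0r add0r; ring.
    have := hi _ hc'; rewrite /c' => z.
    have cb : c b = 0%R by have := z b; rewrite eq_sym (negbTE hab).
    move=> j; case: (eqVneq j a) => [->|ja]; last by have := z j; rewrite (negbTE ja).
    by have := z a; rewrite eqxx cb subr0.
  - by rewrite !hsig !hm_cons e.
elim => [|a u' IHu] [|b v'] //.
- rewrite hm_cons => /esym/(congr1 size); rewrite size_cat /=.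
  by have := indep_nonempty b hi; rewrite -size_eq0; case: (size (h b)).
- rewrite hm_cons => /(congr1 size); rewrite size_cat /=.
  by have := indep_nonempty a hi; rewrite -size_eq0; case: (size (h a)).
rewrite !hm_cons => e.
case: (eqVneq a b) => [eab|hab].
  by subst b; rewrite (IHu v') //; move/eqP: e; rewrite eqseq_cat // eqxx => /eqP.
case: (leqP (size (h a)) (size (h b))) => le; first exact: desc.
apply/esym/desc => //; [by rewrite eq_sym | exact: ltnW].
Qed.
End Main.

Lemma hm_delta n r (h : 'I_n -> seq 'I_r) (k : 'I_n) : h k = [::] ->
  forall w, hmorph h w = hmorph (fun j => h (lift k j)) (pmap (unlift k) w).
Proof.
move=> hk; elim => [|z s IH] //=.
rewrite hm_cons IH; case: unliftP => [j ->|->] //=; by rewrite hk.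
Qed.

Theorem lemma4p1 (n r : nat) (E : equation n) (h : 'I_n -> seq 'I_r) :
  is_solution h E -> erasing h -> rank_h h = n.-1 ->
  exists k : 'I_n,
    (forall j : 'I_n, h j = [::] <-> j = k) /\
    trivial_eq (delta k E) /\
    (forall u : 'rV[rat]_n, (u <= gamma_mx h)%MS <-> u ord0 k = 0%R).
Proof.
move=> hsol [k0 hk0] hrank.
have n_gt0 : (0 < n)%N by case: n k0 {E h hsol hk0 hrank} => [[]|].
set A := gamma_mx h.
have colk0 : forall i, A i k0 = 0 by move=> i; rewrite /A /gamma_mx mxE hk0.
have K : forall c : 'rV[rat]_n, c *m A^T = 0 -> forall j, j != k0 -> c 0 j = 0.
  move=> c hc j hj.
  pose ek : 'rV[rat]_n := delta_mx 0 k0.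
  have ekK : (ek <= kermx A^T)%MS.
    apply/sub_kermxP; rewrite /ek -rowE; apply/matrixP => a i.
    by rewrite !mxE hk0.
  have rK : \rank (kermx A^T) = 1%N.
    by rewrite mxrank_ker mxrank_tr -/(rank_h h) hrank; lia.
  have Kek : (kermx A^T <= ek)%MS.
    by rewrite -(mxrank_leqif_sup ekK) rK /ek mxrank_delta.
  have /submxP [D ->] : (c <= ek)%MS.
    by apply: submx_trans Kek; apply/sub_kermxP.
  by rewrite !mxE big_ord1 !mxE (negbTE hj) andbF mulr0.
exists k0; split; [|split].
- move=> j; split => [hj|->//].
  apply/eqP; apply/negP => /negP hj0.
  suff /K /(_ j hj0) : (delta_mx 0 j : 'rV[rat]_n) *m A^T = 0.
    by rewrite mxE !eqxx /= => /eqP; rewrite oner_eq0.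
  rewrite -rowE; apply/matrixP => a i; by rewrite !mxE hj.
- pose h' := fun j : 'I_n.-1 => h (lift k0 j).
  have hi : indep h'.
    move=> c' hc' j'.
    pose c : 'rV[rat]_n := \row_j (if unlift k0 j is Some j2 then c' j2 else 0).
    have -> : c' j' = c 0 (lift k0 j') by rewrite mxE liftK.
    apply: K; last by rewrite eq_sym neq_lift.
    apply/matrixP => a i; rewrite !mxE (bigD1_ord k0) //= !mxE unlift_none mul0r add0r.
    rewrite -[RHS](hc' i); apply: eq_bigr => j _; by rewrite !mxE liftK.
  rewrite /trivial_eq /delta /=.
  apply: (@main _ _ (\sum_j size (h' j)).+1 h' _ hi) => //.
  by rewrite -!hm_delta.
- have colK : (A <= kermx (delta_mx k0 0 : 'cV[rat]_n))%MS.
    apply/sub_kermxP; rewrite -colE; apply/matrixP => i a; by rewrite !mxE hk0.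
  have rB : \rank (kermx (delta_mx k0 0 : 'cV[rat]_n)) = n.-1.
    by rewrite mxrank_ker mxrank_delta; lia.
  have /eqmxP eqA : (A == kermx (delta_mx k0 0 : 'cV[rat]_n))%MS.
    by rewrite -(geq_leqif (mxrank_leqif_eq colK)) rB -/(rank_h h) hrank.
  move=> u; rewrite eqA; split.
    move/sub_kermxP; rewrite -colE => /matrixP /(_ 0 0); by rewrite !mxE.
  move=> hu; apply/sub_kermxP; rewrite -colE; apply/matrixP => a b.
  by rewrite !mxE !ord1.
Qed.
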